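(* Let $\mathcal{L}=(L,\wedge,\vee,0,1)$ be a complete lattice and let $p\in L$ with $\Omega(p)\neq\emptyset$. The following are equivalent: (a) $p$ is strongly irreducible in $L$; (a') $L\setminus[0,p]$ is closed under $\wedge$; (b) $\Omega(p)$ is closed under $\wedge$, and for every $a\in L\setminus[0,p]$ there exists $y\in\Omega(p)$ with $y\leq a$; (c) $p$ is a pseudo-complement of some element $q$ of $L$ such that $[0,q]$ is uniform; (d) for every $q\in\Omega(p)$, $p$ is a pseudo-complement of $q$ in $L$ and $[0,q]$ is uniform; (e) $p$ is irreducible and weakly $\wedge$-distributive in $L$.
   Context: An element $p$ of a lower semilattice is irreducible if for all $a,b$ with $p\leq a,b$: $a\wedge b\leq p$ implies $a\leq p$ or $b\leq p$; strongly irreducible if this holds for all $a,b$. $[a,b]=\{x\mid a\leq x\leq b\}$. For $p\in L$, $\Omega(p)=\{x\in L\setminus\{0\}\mid p\wedge x=0\}$. A lower semilattice with least element $0$ is uniform if $x\wedge y=0$ implies $x=0$ or $y=0$. A pseudo-complement of $a$ in $L$ is the greatest $x\in L$ with $a\wedge x=0$. An element $p$ is weakly $\wedge$-distributive if whenever $x\wedge y=0$ one has $p=(x\vee p)\wedge(y\vee p)$. *)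

(* Defs.v *)
From HB Require Import structures.
From mathcomp Require Import all_boot all_order.
Set Implicit Arguments. Unset Strict Implicit. Unset Printing Implicit Defensive.
Import Order.TTheory.
Local Open Scope order_scope.

Section Defs.
Context {disp : Order.disp_t} {L : tbLatticeType disp}.

Definition complete_lattice : Prop :=
  forall S : L -> Prop, exists s : L,
    (forall x, S x -> x <= s) /\ (forall u, (forall x, S x -> x <= u) -> s <= u).

Definition irreducible (p : L) : Prop :=
  forall a b : L, p <= a -> p <= b -> a `&` b <= p -> a <= p \/ b <= p.

Definition strongly_irreducible (p : L) : Prop :=
  forall a b : L, a `&` b <= p -> a <= p \/ b <= p.

Definition interval (a b : L) (x : L) : Prop := a <= x /\ x <= b.

Definition Omega (p : L) (x : L) : Prop := x <> \bot /\ p `&` x = \bot.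

Definition uniform_below (q : L) : Prop :=
  forall x y : L, interval \bot q x -> interval \bot q y ->
    x `&` y = \bot -> x = \bot \/ y = \bot.

Definition pseudo_complement (x a : L) : Prop :=
  a `&` x = \bot /\ (forall z : L, a `&` z = \bot -> z <= x).

Definition weakly_meet_distributive (p : L) : Prop :=
  forall x y : L, x `&` y = \bot -> p = (x `|` p) `&` (y `|` p).

End Defs.

(* Main.v *)
Require Import Defs.
From HB Require Import structures.
From mathcomp Require Import all_boot all_order.
Import Order.TTheory.
Local Open Scope order_scope.

Section Helpers.
Context {disp : Order.disp_t} {L : tbLatticeType disp}.
Implicit Types (p q x y z : L).

Lemma intervalE p x : interval \bot p x <-> x <= p.
Proof. by split; [case | move=> h; split; rewrite ?le0x]. Qed.

Lemma omega_not_le p x : Omega p x -> ~ x <= p.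
Proof. by case=> nz e le; apply: nz; rewrite -e; apply/esym/meet_idPr. Qed.
Arguments omega_not_le {p x}.

Lemma SI_omega_meet p x y :
  strongly_irreducible p -> Omega p x -> Omega p y -> Omega p (x `&` y).
Proof.
move=> si ox oy; split.
- move=> e; have : x `&` y <= p by rewrite e le0x.
  by case/si => h; [exact: omega_not_le ox h | exact: omega_not_le oy h].
- apply/eqP; rewrite -lex0; case: ox => _ <-.
  by rewrite lexI leIl /= (le_trans (leIr _ _) (leIl _ _)).
Qed.

Lemma SI_d p : strongly_irreducible p ->
  forall q, Omega p q -> pseudo_complement p q /\ uniform_below q.
Proof.
move=> si q oq; split; first split.
- by case: oq => _ e; rewrite meetC.
- move=> z e; have : q `&` z <= p by rewrite e le0x.
  by case/si => // h; case: (omega_not_le oq h).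
- move=> x y /intervalE hx /intervalE hy e.
  have : x `&` y <= p by rewrite e le0x.
  case: oq => _ e2.
  case/si => h; [left|right]; apply/eqP; rewrite -lex0 -e2 lexI h //.
Qed.

Lemma c_SI p q : pseudo_complement p q -> uniform_below q -> strongly_irreducible p.
Proof.
move=> [e1 pc] un a b hab.
case ha: (a <= p); first by left.
case hb: (b <= p); first by right.
exfalso.
have na : q `&` a <> \bot by move=> e; move: (pc _ e); rewrite ha.
have nb : q `&` b <> \bot by move=> e; move: (pc _ e); rewrite hb.
have i1 : interval \bot q (q `&` a) by split; [exact: le0x | exact: leIl].
have i2 : interval \bot q (q `&` b) by split; [exact: le0x | exact: leIl].
have e3 : (q `&` a) `&` (q `&` b) = \bot.
  apply/eqP; rewrite -lex0 -e1 lexI (le_trans (leIl _ _) (leIl _ _)) /=.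
  apply: le_trans hab; apply: leI2; exact: leIr.
by case: (un _ _ i1 i2 e3).

Qed.

Lemma e_c p : irreducible p -> weakly_meet_distributive p ->
  forall q, Omega p q -> pseudo_complement p q /\ uniform_below q.
Proof.
move=> ir wd.
have P : forall x y, x `&` y = \bot -> x <= p \/ y <= p.
  move=> x y e; have ep := wd _ _ e.
  have [h|h] := ir (x `|` p) (y `|` p) (leUr _ _) (leUr _ _) (eq_ind _ (fun t => t <= p) (lexx p) _ ep).
  - by left; move: h; rewrite leUx => /andP[].
  - by right; move: h; rewrite leUx => /andP[].
move=> q oq; split; first split.
- by case: oq => _ e; rewrite meetC.
- by move=> z e; case: (P _ _ e) => // h; case: (omega_not_le oq h).
- move=> x y /intervalE hx /intervalE hy e.
  case: oq => _ e2.
  case: (P _ _ e) => h; [left|right]; apply/eqP; rewrite -lex0 -e2 lexI h //.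
Qed.

End Helpers.
Arguments omega_not_le {disp L p x}.

Theorem lemma1p15 (disp : Order.disp_t) (L : tbLatticeType disp) (p : L)
    (Lcomplete : complete_lattice (L := L))
    (Omega_ne : exists x : L, Omega p x) :
  let a  := strongly_irreducible p in
  let a' := forall x y : L, ~ interval \bot p x -> ~ interval \bot p y ->
              ~ interval \bot p (x `&` y) in
  let b  := (forall x y : L, Omega p x -> Omega p y -> Omega p (x `&` y)) /\
            (forall x : L, ~ interval \bot p x -> exists2 y, Omega p y & y <= x) in
  let c  := exists q : L, pseudo_complement p q /\ uniform_below q in
  let d  := forall q : L, Omega p q -> pseudo_complement p q /\ uniform_below q in
  let e  := irreducible p /\ weakly_meet_distributive p in
  (a <-> a') /\ (a <-> b) /\ (a <-> c) /\ (a <-> d) /\ (a <-> e).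
Proof.
move=> a a' b c d e.
have [q0 oq0] := Omega_ne.
have ac : a <-> c.
  split; first by move=> si; exists q0; exact: SI_d.
  by case=> q [h1 h2]; exact: c_SI h1 h2.
have ad : a <-> d.
  split; first exact: SI_d.
  by move=> hd; have [h1 h2] := hd q0 oq0; exact: c_SI h1 h2.
split.
  split.
  - move=> si x y /intervalE hx /intervalE hy /intervalE h.
    by case: (si _ _ h).
  - move=> h x y hxy.
    case hx: (x <= p); first by left.
    case hy: (y <= p); first by right.
    exfalso; apply: (h x y).
    + by move/intervalE; rewrite hx.
    + by move/intervalE; rewrite hy.
    + by apply/intervalE.
split.
  split.
  - move=> si; split; first by move=> x y; exact: SI_omega_meet.
    move=> x /intervalE hx; exists (x `&` q0); last exact: leIl.
    split.
    + move=> ez; have : x `&` q0 <= p by rewrite ez le0x.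
      by case/si => h; [exact: hx h | case: (omega_not_le oq0 h)].
    + apply/eqP; rewrite -lex0; case: oq0 => _ <-.
      by apply: leI2; [exact: lexx | exact: leIr].
  - move=> [hm hex] x y hxy.
    case hx: (x <= p); first by left.
    case hy: (y <= p); first by right.
    exfalso.
    have [u ou hu] := hex x (fun h => (elimT negP (negbT hx)) (proj1 (intervalE _ _) h)).
    have [v ov hv] := hex y (fun h => (elimT negP (negbT hy)) (proj1 (intervalE _ _) h)).
    apply: (omega_not_le (hm _ _ ou ov)).
    exact: le_trans (leI2 hu hv) hxy.
split; first exact: ac.
split; first exact: ad.
split.
- move=> si; split; first by move=> x y _ _; exact: si.
  move=> x y exy; have : x `&` y <= p by rewrite exy le0x.
  case/si => h.
  + have -> : x `|` p = p by apply/join_idPr.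
    by apply/esym/meet_idPl; exact: leUr.
  + have -> : y `|` p = p by apply/join_idPr.
    by apply/esym/meet_idPr; exact: leUr.
- by case=> ir wd; apply/ad; exact: e_c.
Qed.
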